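(* The class $\mathrm{CEsp}$ is closed under the Cartesian (Hadamard) product: for nonnegative integers $a_\mu,b_\mu$ ($\mu\vdash n$), $$\Big(\sum_{\mu\vdash n}a_\mu\mathbf{C}_\mu\Big)\times\Big(\sum_{\mu\vdash n}b_\mu\mathbf{C}_\mu\Big)=\sum_{\mu\vdash n}\Big(\sum_{\alpha,\beta\vdash n}a_\alpha b_\beta\, b^\mu_{\alpha,\beta}\Big)\mathbf{C}_\mu,$$ with $b^\mu_{\alpha,\beta}\in\mathbb{N}$, so the product is again a nonnegative integer combination of the $\mathbf{C}_\mu$.
   Context: $\mathrm{CEsp}$ is the category whose objects are species $\sum_{\mu\vdash n}a_\mu\mathbf{C}_\mu$ with $a_\mu\in\mathbb{N}$ (disjoint unions of copies) and whose morphisms are natural transformations. $\mathbf{C}_\mu=X^n/\langle\sigma_\mu\rangle$, where $(X^n/H)[U]=\{\lambda H:\lambda:[n]\to U\text{ bijection}\}$ and $\sigma_\mu$ is the standard permutation of cycle type $\mu$ (cycles filled with $1,\ldots,n$ in increasing order). $(F\times G)[U]=F[U]\times G[U]$. $b^\mu_{\alpha,\beta}$ is the number of double cosets $\langle\sigma_\alpha\rangle\pi\langle\sigma_\beta\rangle$ in $S_n$ with $\langle\sigma_\alpha\rangle\cap\pi\langle\sigma_\beta\rangle\pi^{-1}$ conjugate to $\langle\sigma_\mu\rangle$; equivalently the coefficient of $\mathbf{C}_\mu(\mathbf{z})$ in the Kronecker product $\mathbf{C}_\alpha(\mathbf{z})\star\mathbf{C}_\beta(\mathbf{z})$ of cycle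 index series. *)

(* Defs.v *)
From mathcomp Require Import all_boot all_order all_fingroup.
From mathcomp Require Import zify.

Set Implicit Arguments.
Unset Strict Implicit.
Unset Printing Implicit Defensive.

(* Integer partitions of n.  A partition mu |- n is encoded as its list of   *)
(* parts in nonincreasing order, padded with zeros to length n (a partition  *)
(* of n has at most n parts, each at most n).                                *)
Definition partn_pred (n : nat) (t : n.-tuple 'I_n.+1) : bool :=
  sorted (fun x y : nat => y <= x) (map val t) && (sumn (map val t) == n).

Definition intpartn (n : nat) := {t : n.-tuple 'I_n.+1 | partn_pred t}.

Definition parts n (mu : intpartn n) : seq nat := [seq x <- map val (val mu) | 0 < x].

(* The standard permutation sigma_mu of cycle type mu: points are           *)
(* 0, ..., n-1 (for 1, ..., n); the j-th cycle is                           *)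
(* (c_j  c_j+1  ...  c_j+mu_j-1) with c_j = mu_1 + ... + mu_(j-1).           *)
Definition rot_nat (n c p i : nat) : nat :=
  if [&& c <= i, i < c + p & c + p <= n] then c + (i - c).+1 %% p else i.

Lemma rot_nat_lt n c p (i : 'I_n) : rot_nat n c p i < n.
Proof.
rewrite /rot_nat; case: ifP => [/and3P [h1 h2 h3]|_]; last exact: ltn_ord.
have hp : 0 < p by lia.
have := ltn_pmod (i - c).+1 hp; lia.
Qed.

Definition rot_fun n c p (i : 'I_n) : 'I_n := Ordinal (rot_nat_lt c p i).

Lemma rot_fun_inj n c p : injective (@rot_fun n c p).
Proof.
move=> i j /(congr1 val); rewrite /= /rot_nat => e; apply: val_inj => /=.
move: e; case: ifP => [/and3P [h1 h2 h3]|/negbT hi];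
  case: ifP => [/and3P [k1 k2 k3]|/negbT hj] //.
- have hp : 0 < p by lia.
  have a1 := ltn_pmod (i - c).+1 hp; have a2 := ltn_pmod (j - c).+1 hp.
  case: (ltngtP (i - c).+1 p) => q1; case: (ltngtP (j - c).+1 p) => q2;
    rewrite ?(modn_small q1) ?(modn_small q2) ?q1 ?q2 ?modnn; lia.
- have hp : 0 < p by lia.
  have a1 := ltn_pmod (i - c).+1 hp; move=> e; move: hj; rewrite -e; lia.
- have hp : 0 < p by lia.
  have a1 := ltn_pmod (j - c).+1 hp; move=> e; move: hi; rewrite e; lia.
Qed.

Definition rot_perm n c p : {perm 'I_n} := perm (@rot_fun_inj n c p).

Definition sigma_std n (mu : intpartn n) : {perm 'I_n} :=
  (\prod_(j < size (parts mu))
     rot_perm n (sumn (take j (parts mu))) (nth 0 (parts mu) j))%g.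

Definition Hcyc n (mu : intpartn n) : {group {perm 'I_n}} := <[sigma_std mu]>%G.

(* b^mu_{alpha,beta}: number of double cosets <s_a> pi <s_b> in S_n with    *)
(* <s_a> :&: pi <s_b> pi^-1 conjugate to <s_mu>.  (The condition only       *)
(* depends on the double coset of pi.)                                      *)
Definition dcoset_cond n (al be mu : intpartn n) (pi : {perm 'I_n}) : bool :=
  [exists g : {perm 'I_n},
     ((Hcyc al :&: (pi *: Hcyc be :* pi^-1)) :^ g)%g == Hcyc mu :> {set _}].

Definition bcoef n (al be mu : intpartn n) : nat :=
  #|[set (Hcyc al :* pi * Hcyc be)%g | pi in [set pi | dcoset_cond al be mu pi]]|.

(* The species  sum_mu a_mu C_mu,  C_mu = X^n / <sigma_mu>.                 *)
(* (X^n/H)[U] = { lambda H : lambda : [n] -> U bijection }, where           *)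
(* lambda H = { lambda o h : h in H }.                                       *)
Section Species.
Variable n : nat.

Definition is_coset (U : finType) (mu : intpartn n) (S : {set {ffun 'I_n -> U}}) : bool :=
  [exists lam : {ffun 'I_n -> U},
     [&& injectiveb lam, #|U| == n &
         S == [set [ffun i => lam ((h : {perm 'I_n}) i)] | h in Hcyc mu]]].

(* sum_mu a_mu C_mu [U] : triples (mu, copy index i < a_mu, element of C_mu[U]) *)
Definition CE_pred (a : intpartn n -> nat) (U : finType)
  (x : intpartn n * nat * {set {ffun 'I_n -> U}}) : bool :=
  (x.1.2 < a x.1.1) && is_coset x.1.1 x.2.

Definition CE (a : intpartn n -> nat) (U : finType) : Type :=
  {x : intpartn n * nat * {set {ffun 'I_n -> U}} | CE_pred a x}.

Definition map_cosets (U V : finType) (f : U -> V) (S : {set {ffun 'I_n -> U}})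
  : {set {ffun 'I_n -> V}} := [set [ffun i => f ((g : {ffun 'I_n -> U}) i)] | g in S].

Lemma CE_pred_map (a : intpartn n -> nat) (U V : finType) (f : U -> V)
  (fb : bijective f) (x : intpartn n * nat * {set {ffun 'I_n -> U}}) :
  CE_pred a x -> CE_pred a (x.1, map_cosets f x.2).
Proof.
case/andP=> /= ha /existsP [lam /and3P [il cU /eqP eS]].
rewrite /CE_pred /= ha /=; apply/existsP; exists [ffun i => f (lam i)].
apply/and3P; split.
- apply/injectiveP => i j; rewrite !ffunE => /(bij_inj fb).
  by move/injectiveP: il; apply.
- by rewrite -(bij_eq_card fb).
- rewrite /map_cosets eS -imset_comp; apply/eqP/eq_imset => h /=.
  by apply/ffunP => i; rewrite !ffunE.
Qed.

Definition CE_map (a : intpartn n -> nat) (U V : finType) (f : U -> V)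
  (fb : bijective f) (x : CE a U) : CE a V :=
  exist _ ((val x).1, map_cosets f (val x).2) (CE_pred_map fb (valP x)).

Definition prod_coef (a b : intpartn n -> nat) (mu : intpartn n) : nat :=
  \sum_(al : intpartn n) \sum_(be : intpartn n) a al * b be * bcoef al be mu.

End Species.

(* Main.v *)
Require Import Defs.
From mathcomp Require Import all_boot all_order all_fingroup.
From mathcomp Require Import all_solvable.
From mathcomp Require Import zify.
From Stdlib Require Import ClassicalEpsilon.

Set Implicit Arguments.
Unset Strict Implicit.
Unset Printing Implicit Defensive.


Lemma sumn_take_mono (p : seq nat) i j : i <= j -> sumn (take i p) <= sumn (take j p).
Proof.
move=> ij; rewrite -(take_takel p ij).
rewrite -{2}(cat_take_drop i (take j p)) sumn_cat; apply: leq_addr.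
Qed.

Lemma sumn_takeS (p : seq nat) j : j < size p ->
  sumn (take j.+1 p) = sumn (take j p) + nth 0 p j.
Proof. by move=> jp; rewrite (take_nth 0 jp) sumn_rcons. Qed.

Lemma block_cover (p : seq nat) i : i < sumn p ->
  exists2 j, j < size p & sumn (take j p) <= i < sumn (take j p) + nth 0 p j.
Proof.
elim: p i => [|x p IH] i //= ip.
case: (ltnP i x) => hx; first by exists 0 => //=; rewrite take0 /=; lia.
have [j jp hj] := IH (i - x) ltac:(lia).
exists j.+1 => //=; lia.
Qed.

Lemma block_uniq (p : seq nat) i j1 j2 : j1 < size p -> j2 < size p ->
  sumn (take j1 p) <= i < sumn (take j1 p) + nth 0 p j1 ->
  sumn (take j2 p) <= i < sumn (take j2 p) + nth 0 p j2 -> j1 = j2.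
Proof.
move=> h1 h2 b1 b2; case: (ltngtP j1 j2) => // hj.
- have := sumn_take_mono p hj; rewrite sumn_takeS //; lia.
- have := sumn_take_mono p hj; rewrite sumn_takeS //; lia.
Qed.

Lemma nth_flatten_block T (x0 : T) (ss : seq (seq T)) j t :
  j < size ss -> t < size (nth [::] ss j) ->
  nth x0 (flatten ss) (sumn (take j (shape ss)) + t) = nth x0 (nth [::] ss j) t.
Proof.
elim: ss j => [|s ss IH] [|j] //= hj ht.
  by rewrite /= add0n nth_cat ht.
rewrite nth_cat ifN; last lia.
by rewrite -IH //; congr nth; lia.
Qed.

Section Blocks.
Variable n : nat.

Lemma prod_rot_block (p : seq nat) (m : nat) (i : 'I_n) :
  sumn p <= n -> m <= size p ->
  (forall j, j < m -> sumn (take j p) <= i < sumn (take j p) + nth 0 p j ->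
     nat_of_ord ((\prod_(j < m) rot_perm n (sumn (take j p)) (nth 0 p j))%g i)
       = sumn (take j p) + (i - sumn (take j p)).+1 %% nth 0 p j) /\
  (sumn (take m p) <= i ->
     nat_of_ord ((\prod_(j < m) rot_perm n (sumn (take j p)) (nth 0 p j))%g i) = i).
Proof.
move=> hs; elim: m => [|m IH] hm.
  by split=> // _; rewrite big_ord0 perm1.
have hmp : m < size p by [].
have [IH1 IH2] := IH (ltnW hm).
have cS := sumn_takeS hmp.
have cn : sumn (take m.+1 p) <= n.
  by apply: leq_trans hs; rewrite -{2}(cat_take_drop m.+1 p) sumn_cat leq_addr.
rewrite big_ord_recr /=; split.
- move=> j jm hb; rewrite permM.
  case: (ltngtP j m) => [jlt|jgt|jeq]; last 2 first.
  - lia.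
  - subst j; rewrite permE /= /rot_nat IH2; last lia.
    by case: ifP => //; move/negbT; rewrite !negb_and; lia.
  have mono := sumn_take_mono p jlt.
  rewrite sumn_takeS in mono; last lia.
  rewrite permE /= /rot_nat (IH1 j) //.
  case: ifP => // /and3P [h1 _ _].
  have hp : 0 < nth 0 p j by lia.
  have := ltn_pmod (i - sumn (take j p)).+1 hp; lia.
- move=> hi; rewrite permM permE /= /rot_nat IH2; last lia.
  case: ifP => //; lia.
Qed.

Lemma sumn_filter_pos (s : seq nat) : sumn [seq x <- s | 0 < x] = sumn s.
Proof. by elim: s => //= x s IH; case: x => //= x; rewrite IH. Qed.

Lemma parts_sum (mu : intpartn n) : sumn (parts mu) = n.
Proof.
by rewrite /parts sumn_filter_pos; case: mu => t /= /andP [_ /eqP].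
Qed.

Lemma parts_pos (mu : intpartn n) : all (fun x => 0 < x) (parts mu).
Proof. by rewrite /parts; apply: filter_all. Qed.

Lemma sigma_block (mu : intpartn n) (i : 'I_n) j :
  j < size (parts mu) ->
  sumn (take j (parts mu)) <= i < sumn (take j (parts mu)) + nth 0 (parts mu) j ->
  nat_of_ord (sigma_std mu i) = sumn (take j (parts mu)) +
      (i - sumn (take j (parts mu))).+1 %% nth 0 (parts mu) j.
Proof.
move=> jp hb; rewrite /sigma_std.
have [H1 _] := @prod_rot_block (parts mu) (size (parts mu)) i
  (eq_leq (parts_sum mu)) (leqnn _).
exact: H1.
Qed.

End Blocks.


Section Uniq.
Variable n : nat.
Implicit Types mu nu : intpartn n.

Local Notation c mu j := (sumn (take j (parts mu))).
Local Notation pp mu j := (nth 0 (parts mu) j).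

Lemma sigma_iter mu (x : 'I_n) j t : j < size (parts mu) ->
  c mu j <= x < c mu j + pp mu j ->
  nat_of_ord (iter t (sigma_std mu) x) = c mu j + ((x - c mu j) + t) %% pp mu j.
Proof.
move=> jp hb; have hp : 0 < pp mu j by lia.
elim: t => [|t IH]; first by rewrite addn0 modn_small /=; lia.
rewrite iterS (sigma_block jp); last first.
  have := ltn_pmod (x - c mu j + t) hp; lia.
rewrite IH addKn; congr (_ + _).
by rewrite -addn1 modnDml addn1 addnS.
Qed.

Lemma porbit_sigma mu (x : 'I_n) j : j < size (parts mu) ->
  c mu j <= x < c mu j + pp mu j ->
  #|porbit (sigma_std mu) x| = pp mu j.
Proof.
move=> jp hb; have hp : 0 < pp mu j by lia.
set q := #|porbit _ x|.
have q0 : 0 < q by rewrite lt0n card_porbit_neq0.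
have Hq := iter_porbit (sigma_std mu) x; rewrite -/q in Hq.
have := congr1 (@nat_of_ord n) Hq; rewrite (@sigma_iter mu x j q jp hb) => e.
have dv : pp mu j %| q.
  have e2 : (x - c mu j) + q = (x - c mu j) + 0 %[mod pp mu j].
    rewrite addn0 [in RHS]modn_small; lia.
  by move/eqP: e2; rewrite eqn_modDl mod0n => /eqP; move/eqP; rewrite -/(dvdn _ _).
apply/eqP; rewrite eqn_leq (dvdn_leq q0 dv) andbT leqNgt; apply/negP => qlt.
have U := uniq_traject_porbit (sigma_std mu) x; rewrite -/q in U.
have hn := @nth_uniq _ x _ (pp mu j) 0 _ _ U.
rewrite size_traject in hn.
have : nth x (traject (sigma_std mu) x q) (pp mu j) == nth x (traject (sigma_std mu) x q) 0.
  rewrite !nth_traject //; apply/eqP/val_inj.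
  by rewrite /= (@sigma_iter mu x j _ jp hb) /= modnDr modn_small; lia.
by rewrite hn //; lia.
Qed.


Definition invc (H : {set {perm 'I_n}}) : seq nat :=
  [seq #|aperm x @: H| | x <- enum 'I_n].

Lemma invc_conj (H : {set {perm 'I_n}}) g : perm_eq (invc (H :^ g)%g) (invc H).
Proof.
have E x : #|aperm (g x) @: (H :^ g)%g| = #|aperm x @: H|.
  rewrite /conjugate -imset_comp.
  have -> : [set (aperm (g x) \o conjg^~ g) s | s in H] = [set g (aperm x s) | s in H].
    by apply: eq_imset => s /=; rewrite /aperm permJ.
  by rewrite (imset_comp g (aperm x)) card_imset //; apply: perm_inj.
rewrite /invc.
have -> : [seq #|aperm x @: H| | x <- enum 'I_n] =
          [seq #|aperm x @: (H :^ g)%g| | x <- [seq g y | y <- enum 'I_n]].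
  by rewrite -map_comp; apply: eq_map => y /=; rewrite E.
apply: perm_map; apply: uniq_perm.
- exact: enum_uniq.
- by rewrite map_inj_uniq ?enum_uniq //; apply: perm_inj.
move=> y; rewrite mem_enum; symmetry; apply/mapP; exists (g^-1 y)%g.
  by rewrite mem_enum.
by rewrite permKV.
Qed.

Definition Fl (s : seq nat) := flatten [seq nseq q q | q <- s].

Lemma shape_Fl s : shape [seq nseq q q | q <- s] = s.
Proof. by rewrite /shape -map_comp; elim: s => //= q s ->; rewrite size_nseq. Qed.

Lemma invc_sigma mu : invc <[sigma_std mu]>%g = Fl (parts mu).
Proof.
have sz : size (invc <[sigma_std mu]>%g) = n by rewrite size_map size_enum_ord.
apply: (eq_from_nth (x0 := 0)).
  by rewrite sz /Fl size_flatten shape_Fl parts_sum.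
rewrite sz => i ilt.
have [j jp hb] := @block_cover (parts mu) i ltac:(by rewrite parts_sum).
have -> : i = sumn (take j (shape [seq nseq q q | q <- parts mu])) + (i - c mu j).
  by rewrite shape_Fl; lia.
rewrite /Fl nth_flatten_block; last first.
- by rewrite (nth_map 0) // size_nseq; lia.
- by rewrite size_map.
rewrite (nth_map 0) // nth_nseq ifT; last lia.
rewrite shape_Fl subnKC; last lia.
rewrite /invc (nth_map (Ordinal ilt)) ?size_enum_ord //.
have -> : nth (Ordinal ilt) (enum 'I_n) i = Ordinal ilt.
  by apply: val_inj; rewrite /= nth_enum_ord.
have := @porbit_sigma mu (Ordinal ilt) j jp hb.
by rewrite porbit.unlock => ->.
Qed.

End Uniq.


Definition geR := fun x y : nat => y <= x.

Lemma geR_trans : transitive geR.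
Proof. by move=> x y z; rewrite /geR => h1 h2; apply: leq_trans h2 h1. Qed.

Lemma geR_anti : antisymmetric geR.
Proof. by move=> x y; rewrite /geR => /andP [h1 h2]; apply/eqP; rewrite eqn_leq h1 h2. Qed.

Lemma mem_le_sumn (s : seq nat) x : x \in s -> x <= sumn s.
Proof.
elim: s => //= y s IH; rewrite inE => /orP [/eqP ->|/IH]; first exact: leq_addr.
by move=> h; apply: leq_trans h (leq_addl _ _).
Qed.

Lemma size_le_sumn (s : seq nat) : all (fun x => 0 < x) s -> size s <= sumn s.
Proof. by elim: s => //= x s IH /andP [h /IH]; lia. Qed.

Lemma Fl_mem s y : y \in Fl s -> y \in s.
Proof.
by move/flatten_mapP => [q qs]; rewrite mem_nseq => /andP [_ /eqP ->].
Qed.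

Lemma Fl_sorted s : sorted geR s -> sorted geR (Fl s).
Proof.
rewrite !(sorted_pairwise geR_trans).
elim: s => //= q s IH /andP [hq /IH hs].
rewrite pairwise_cat hs andbT; apply/andP; split.
  apply/allrelP => x y; rewrite mem_nseq => /andP [_ /eqP ->] /Fl_mem ys.
  by move/allP: hq => /(_ y ys).
suff P k : pairwise geR (nseq k q) by apply: P.
elim: k => //= k ->; rewrite andbT; apply/allP => y.
by rewrite mem_nseq => /andP [_ /eqP ->]; rewrite /geR.
Qed.

Lemma Fl_inj s1 s2 : all (fun x => 0 < x) s1 -> all (fun x => 0 < x) s2 ->
  Fl s1 = Fl s2 -> s1 = s2.
Proof.
elim: s1 s2 => [|q s1 IH] [|r s2] //=.
- by move=> _ /andP [h _]; case: r h.
- by move=> /andP [h _]; case: q h.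
move=> /andP [hq h1] /andP [hr h2] e.
have qr : q = r.
  by move: e; case: q hq => // q _; case: r hr => // r _ /= [->].
subst r; congr cons; apply: IH => //.
by move/(congr1 (drop q)): e; rewrite !drop_size_cat ?size_nseq.
Qed.

Lemma sorted_decomp (s : seq nat) : sorted geR s ->
  s = [seq x <- s | 0 < x] ++ nseq (size s - size [seq x <- s | 0 < x]) 0.
Proof.
elim: s => //= x s IH hs.
have hs' := path_sorted hs.
case: x hs => [|x] hs /=.
  have a0 := order_path_min geR_trans hs.
  have : all (pred1 0) s.
    by apply/allP => y /(allP a0); rewrite /geR /= leqn0.
  move/all_pred1P => e.
  have -> : [seq x <- s | 0 < x] = [::].
    by rewrite e; elim: (size s).
  by rewrite subn0 /= -e.
by rewrite {1}(IH hs') subSS.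
Qed.

Section PU.
Variable n : nat.
Implicit Types mu nu : intpartn n.

Lemma partn_sorted mu : sorted geR (map val (val mu)).
Proof. by case: mu => t /= /andP []. Qed.

Lemma parts_sorted mu : sorted geR (parts mu).
Proof. exact: sorted_filter geR_trans _ _ (partn_sorted mu). Qed.

Lemma parts_inj mu nu : parts mu = parts nu -> mu = nu.
Proof.
move=> e; apply: val_inj; apply: val_inj; apply: (inj_map val_inj).
rewrite (sorted_decomp (partn_sorted mu)) (sorted_decomp (partn_sorted nu)).
by rewrite -!/(parts _) e !size_map !size_tuple.
Qed.

Lemma Hcyc_conj_uniq mu nu g : (Hcyc mu :^ g)%g = Hcyc nu :> {set _} -> mu = nu.
Proof.
move=> e; apply: parts_inj.
have P := invc_conj (Hcyc mu) g; rewrite e /= !invc_sigma in P.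
apply: Fl_inj; rewrite ?parts_pos //.
by apply: (sorted_eq geR_trans geR_anti); rewrite ?Fl_sorted ?parts_sorted // perm_sym.
Qed.

End PU.


Lemma uniq_flatten_proj (S T : eqType) (F : S -> seq T) (pr : T -> S) (s : seq S) :
  uniq s -> (forall x, x \in s -> uniq (F x)) ->
  (forall x y, x \in s -> y \in F x -> pr y = x) ->
  uniq (flatten [seq F x | x <- s]).
Proof.
elim: s => //= x s IH /andP [xs us] hu hp.
rewrite cat_uniq hu ?inE ?eqxx // IH //; last first.
- by move=> z y zs; apply: hp; rewrite inE zs orbT.
- by move=> z zs; apply: hu; rewrite inE zs orbT.
rewrite andbT; apply/hasP => -[y /flatten_mapP [z zs yz] yx].
have e1 := hp _ _ (mem_head x s) yx.
have e2 : pr y = z by apply: hp; rewrite ?inE ?zs ?orbT.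
by move: xs; rewrite -e1 e2 zs.
Qed.

Section Exist.
Variable n : nat.
Variable tau : {perm 'I_n}.

Definition os : seq {set 'I_n} := sort (fun A B : {set 'I_n} => #|B| <= #|A|) (enum (porbits tau)).
Definition traj (A : {set 'I_n}) : seq 'I_n :=
  if [pick x in A] is Some x then traject tau x #|A| else [::].
Definition ws := map traj os.
Definition w := flatten ws.
Definition pl := map (fun A : {set 'I_n} => #|A|) os.

Lemma mem_os A : (A \in os) = (A \in porbits tau).
Proof. by rewrite mem_sort mem_enum. Qed.

Lemma os_rep A : A \in os -> exists x, [/\ [pick x in A] = Some x, A = porbit tau x &
  traj A = traject tau x #|porbit tau x| ].
Proof.
rewrite mem_os => /imsetP [y _ ->].
rewrite /traj; case: pickP => [x xA|]; last by move/(_ y); rewrite porbit_id.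
exists x; have e : porbit tau y = porbit tau x by apply/eqP; rewrite eq_porbit_mem porbit_sym.
by split => //; rewrite e.
Qed.

Lemma shape_ws : shape ws = pl.
Proof.
rewrite /shape /ws /pl -map_comp; apply/eq_in_map => A /os_rep [x [_ e et]].
by rewrite /= et size_traject e.
Qed.

Lemma w_uniq : uniq w.
Proof.
apply: (uniq_flatten_proj (pr := porbit tau)).
- by rewrite sort_uniq enum_uniq.
- move=> A /os_rep [x [_ _ et]]; rewrite -/(traj A) et; apply: uniq_traject_porbit.
move=> A y /os_rep [x [_ eA et]]; rewrite -/(traj A) et -porbit_traject => yx; rewrite eA.
by apply/eqP; rewrite eq_porbit_mem.
Qed.

Lemma w_all y : y \in w.
Proof.
apply/flatten_mapP; exists (porbit tau y).
  by rewrite mem_os; apply: imset_f.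
have : porbit tau y \in os by rewrite mem_os; apply: imset_f.
move=> /os_rep [x [_ e ->]]; rewrite -porbit_traject -e; exact: porbit_id.
Qed.

Lemma size_w : size w = n.
Proof.
have := (card_uniqP w_uniq) => <-.
rewrite -[RHS]card_ord; apply: eq_card => y; by rewrite w_all.
Qed.

Lemma sum_pl : sumn pl = n.
Proof. by rewrite -shape_ws -size_flatten size_w. Qed.

Lemma pl_pos : all (fun x => 0 < x) pl.
Proof.
apply/allP => q /mapP [A /os_rep [x [_ -> _]] ->].
by rewrite lt0n card_porbit_neq0.
Qed.

Lemma pl_sorted : sorted geR pl.
Proof.
rewrite sorted_map; apply: sort_sorted => A B /=; exact: leq_total.
Qed.

Definition plz := pl ++ nseq (n - size pl) 0.

Lemma plz_le x : x \in plz -> x < n.+1.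
Proof.
rewrite mem_cat mem_nseq => /orP [/mem_le_sumn|/andP [_ /eqP ->] //].
by rewrite sum_pl.
Qed.

Definition tpl : n.-tuple 'I_n.+1 := insubd (nseq_tuple n ord0) (map inord plz).

Lemma size_plz : size plz = n.
Proof.
have := size_le_sumn pl_pos; rewrite sum_pl /plz size_cat size_nseq; lia.
Qed.

Lemma tpl_val : map val tpl = plz.
Proof.
rewrite val_insubd size_map size_plz eqxx -map_comp.
rewrite -[RHS]map_id; apply/eq_in_map => x /plz_le /= h; exact: inordK.
Qed.

Lemma tpl_pred : partn_pred tpl.
Proof.
rewrite /partn_pred tpl_val /plz sumn_cat sum_pl.
have -> : sumn (nseq (n - size pl) 0) = 0 by elim: (n - size pl).
rewrite addn0 eqxx andbT (sorted_pairwise geR_trans) pairwise_cat.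
rewrite -(sorted_pairwise geR_trans) pl_sorted /=; apply/andP; split.
  by apply/allrelP => x y _; rewrite mem_nseq => /andP [_ /eqP ->].
suff P k : pairwise geR (nseq k 0) by apply: P.
by elim: k => //= k ->; rewrite andbT; apply/allP => y; rewrite mem_nseq => /andP [_ /eqP ->].
Qed.

Definition mu_tau : intpartn n := exist _ tpl tpl_pred.

Lemma parts_mu_tau : parts mu_tau = pl.
Proof.
rewrite /parts /= tpl_val /plz filter_cat.
have -> : [seq x <- nseq (n - size pl) 0 | 0 < x] = [::] by elim: (n - size pl).
by rewrite cats0; apply/all_filterP; exact: pl_pos.
Qed.

Definition hfun (i : 'I_n) : 'I_n := nth i w i.

Lemma hfun_inj : injective hfun.
Proof.
move=> i j; rewrite /hfun (set_nth_default i j) ?size_w // => /eqP.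
by rewrite nth_uniq ?size_w ?w_uniq // => /eqP /val_inj.
Qed.

Definition hp : {perm 'I_n} := perm hfun_inj.

Lemma hp_eq i : hp (sigma_std mu_tau i) = tau (hp i).
Proof.
rewrite !permE /hfun.
have [j jp hb] := @block_cover (parts mu_tau) i ltac:(by rewrite parts_sum).
have sb := sigma_block jp hb.
move: jp hb sb; rewrite parts_mu_tau => jp hb sb.
have jos : j < size os by rewrite size_map in jp.
have Aos : nth set0 os j \in os by apply: mem_nth.
have [x [_ eA et]] := os_rep Aos.
have pj : nth 0 pl j = #|porbit tau x| by rewrite (nth_map set0) // -eA.
set c := sumn (take j pl) in hb sb *.
have t_lt : i - c < nth 0 pl j by lia.
have t2_lt : (i - c).+1 %% nth 0 pl j < nth 0 pl j by apply: ltn_pmod; lia.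
have Nw t y : t < nth 0 pl j -> nth y w (c + t) = iter t tau x.
  move=> tl; rewrite /w /c -shape_ws nth_flatten_block; last first.
  - by rewrite (nth_map set0) // et size_traject -pj.
  - by rewrite size_map.
  rewrite (nth_map set0) // et (set_nth_default x) ?size_traject -?pj //.
  by rewrite nth_traject // -pj.
have -> : nat_of_ord i = c + (i - c) by lia.
rewrite Nw // sb Nw // -iterS.
case: (ltngtP (i - c).+1 (nth 0 pl j)) => h.
- by rewrite modn_small.
- lia.
- by rewrite h modnn pj iter_porbit.
Qed.

Lemma tau_conj : (tau ^ hp^-1)%g = sigma_std mu_tau.
Proof.
apply/permP => i; rewrite conjgE invgK !permM.
apply: (@perm_inj _ hp); rewrite -hp_eq; congr (hp _); by rewrite permK.
Qed.

End Exist.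

Lemma cyclic_conj_exists n (L : {group {perm 'I_n}}) : cyclic L ->
  exists mu g, (L :^ g)%g = Hcyc mu :> {set _}.
Proof.
move/cyclicP => [tau ->]; exists (mu_tau tau), (hp tau)^-1%g.
by rewrite -cycleJ tau_conj.
Qed.


Section Grp.
Variable n : nat.
Implicit Types al be mu nu : intpartn n.
Local Open Scope group_scope.

Lemma Lg_eq al be (pi : {perm 'I_n}) :
  Hcyc al :&: (pi *: Hcyc be :* pi^-1) = Hcyc al :&: (Hcyc be :^ pi^-1).
Proof. by rewrite conjsgE invgK; congr (_ :&: _); apply/setP => y; rewrite mem_rcoset !mem_lcoset mem_rcoset mulgA. Qed.

Lemma cond_exists al be pi : exists mu, dcoset_cond al be mu pi.
Proof.
have cy : cyclic (Hcyc al :&: Hcyc be :^ pi^-1)%G.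
  apply: cyclicS (subsetIl _ _) _; exact: cycle_cyclic.
have [mu [g e]] := cyclic_conj_exists cy.
exists mu; apply/existsP; exists g; rewrite Lg_eq; apply/eqP; exact: e.
Qed.

Lemma cond_uniq al be mu nu pi :
  dcoset_cond al be mu pi -> dcoset_cond al be nu pi -> mu = nu.
Proof.
move=> /existsP [g /eqP e1] /existsP [g' /eqP e2].
apply: (@Hcyc_conj_uniq n mu nu (g^-1 * g')).
by rewrite conjsgM -e1 conjsgK e2.
Qed.

Lemma dc_memP al be pi x :
  reflect (exists h, exists k, [/\ h \in Hcyc al, k \in Hcyc be & x = h * pi * k])
          (x \in Hcyc al :* pi * Hcyc be).
Proof.
apply: (iffP idP).
  move/mulsgP => [y k /rcosetP [h hH ->] kH ->]; by exists h, k.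
move=> [h [k [hH kH ->]]]; apply: mem_mulg => //; apply/rcosetP; by exists h.
Qed.

Lemma dc_mem_eq al be pi x : x \in Hcyc al :* pi * Hcyc be ->
  Hcyc al :* x * Hcyc be = Hcyc al :* pi * Hcyc be.
Proof.
move/dc_memP => [h [k [hH kH ->]]]; apply/setP => y.
apply/dc_memP/dc_memP => [[h' [k' [h'H k'H ->]]]|[h' [k' [h'H k'H ->]]]].
  exists (h' * h), (k * k'); rewrite !groupM //; split=> //; by rewrite !mulgA.
exists (h' * h^-1), (k^-1 * k'); rewrite !groupM ?groupV //; split=> //.
by rewrite !mulgA mulgKV mulgK.
Qed.

Lemma cond_dc al be mu pi x : dcoset_cond al be mu pi ->
  x \in Hcyc al :* pi * Hcyc be -> dcoset_cond al be mu x.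
Proof.
move=> /existsP [g /eqP e] /dc_memP [h [k [hH kH ->]]].
apply/existsP; exists (h * g); apply/eqP; rewrite Lg_eq -e Lg_eq.
rewrite !invMg !conjsgM (conjGid (groupVr kH)).
rewrite -{1}(conjGid (groupVr hH)) -conjIg.
by rewrite conjsgKV.
Qed.

End Grp.


Section Sp.
Variable n : nat.
Variable U : finType.
Implicit Types al be mu : intpartn n.
Implicit Types l r : {ffun 'I_n -> U}.
Implicit Types S T : {set {ffun 'I_n -> U}}.

Definition fcmp l (h : {perm 'I_n}) : {ffun 'I_n -> U} := [ffun i => l (h i)].
Definition cosetf l (H : {set {perm 'I_n}}) : {set {ffun 'I_n -> U}} :=
  [set fcmp l h | h in H].

Lemma comp_comp l a b : fcmp (fcmp l a) b = fcmp l (b * a)%g.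
Proof. by apply/ffunP => i; rewrite !ffunE permM. Qed.

Lemma comp1 l : fcmp l 1%g = l.
Proof. by apply/ffunP => i; rewrite !ffunE perm1. Qed.

Lemma comp_injr l a b : injective l -> fcmp l a = fcmp l b -> a = b.
Proof.
move=> il e; apply/permP => i; apply: il.
by move/ffunP: e => /(_ i); rewrite !ffunE.
Qed.

Lemma comp_injl l l' a : fcmp l a = fcmp l' a -> l = l'.
Proof.
move=> e; apply/ffunP => i; move/ffunP: e => /(_ (a^-1%g i)).
by rewrite !ffunE permKV.
Qed.

Lemma comp_inj l a : injective l -> injective (fcmp l a).
Proof. by move=> il i j; rewrite !ffunE => /il /perm_inj. Qed.

Lemma mem_cosetf l l' (H : {set {perm 'I_n}}) :
  reflect (exists2 h, h \in H & l' = fcmp l h) (l' \in cosetf l H).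
Proof. exact: imsetP. Qed.

Lemma cosetf_mem l l' (H : {group {perm 'I_n}}) : l' \in cosetf l H ->
  cosetf l' H = cosetf l H.
Proof.
move=> /mem_cosetf [h hH ->]; apply/setP => y.
apply/mem_cosetf/mem_cosetf => -[k kH ->].
  by exists (k * h)%g; rewrite ?groupM // comp_comp.
by exists (k * h^-1)%g; rewrite ?groupM ?groupV // comp_comp mulgKV.
Qed.

Lemma cosetf_id l (H : {group {perm 'I_n}}) : l \in cosetf l H.
Proof. by apply/mem_cosetf; exists 1%g; rewrite ?group1 ?comp1. Qed.

Lemma ex_perm l r : injective l -> injective r -> #|U| = n ->
  exists d, r = fcmp l d.
Proof.
move=> il ir cU.
have onto : forall u, u \in codom l.
  by apply: inj_card_onto => //; rewrite cU card_ord.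
pose df (i : 'I_n) : 'I_n := iinv (onto (r i)).
have dinj : injective df.
  by move=> i j /(congr1 l); rewrite /df !f_iinv => /ir.
exists (perm dinj); apply/ffunP => i; by rewrite ffunE permE /df f_iinv.
Qed.

Definition Dset S T := [set d : {perm 'I_n} | [exists r in T, fcmp r d \in S]].
Definition Vset (d : {perm 'I_n}) S T := [set l in S | fcmp l d^-1 \in T].
Definition Rset (ga d : {perm 'I_n}) S T := [set fcmp l ga | l in Vset d S T].

Lemma Dset_comp al be r d : injective r ->
  Dset (cosetf (fcmp r d) (Hcyc al)) (cosetf r (Hcyc be)) = (Hcyc al :* d * Hcyc be)%g.
Proof.
move=> ir; apply/setP => x; rewrite inE; apply/existsP/dc_memP.
  move=> [rho /andP [/mem_cosetf [k kH ->]]].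
  rewrite comp_comp => /mem_cosetf [h hH]; rewrite comp_comp => /(comp_injr ir) e.
  exists h, k^-1%g; split; rewrite ?groupV //.
  by rewrite -e mulgK.
move=> [h [k [hH kH ->]]]; exists (fcmp r k^-1%g).
apply/andP; split; first by apply/mem_cosetf; exists k^-1%g; rewrite ?groupV.
apply/mem_cosetf; exists h => //; rewrite !comp_comp; congr fcmp.
by rewrite mulgK.
Qed.

Lemma Vset_comp al be r d : injective r ->
  Vset d (cosetf (fcmp r d) (Hcyc al)) (cosetf r (Hcyc be)) =
  cosetf (fcmp r d) (Hcyc al :&: (d *: Hcyc be :* d^-1))%g.
Proof.
move=> ir; rewrite Lg_eq; apply/setP => y; rewrite inE.
apply/andP/mem_cosetf.
  move=> [/mem_cosetf [h hH ->]]; rewrite !comp_comp => /mem_cosetf [k kH].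
  move/(comp_injr ir) => e; exists h; last by rewrite comp_comp.
  by rewrite in_setI hH mem_conjg invgK conjgE mulgA e.
move=> [h]; rewrite in_setI mem_conjg invgK => /andP [hH hB] ->; split.
  by apply/mem_cosetf; exists h.
apply/mem_cosetf; exists (h ^ d)%g => //; by rewrite !comp_comp conjgE !mulgA.
Qed.

Lemma Rset_comp al be mu r d g : injective r ->
  ((Hcyc al :&: (d *: Hcyc be :* d^-1)) :^ g)%g = Hcyc mu :> {set _} ->
  Rset g^-1 d (cosetf (fcmp r d) (Hcyc al)) (cosetf r (Hcyc be)) =
  cosetf (fcmp (fcmp r d) g^-1) (Hcyc mu).
Proof.
move=> ir e; rewrite /Rset Vset_comp // -e; apply/setP => y.
apply/imsetP/mem_cosetf.
  move=> [l /mem_cosetf [h hL ->] ->]; exists (h ^ g)%g; first by rewrite memJ_conjg.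
  by rewrite !comp_comp conjgE !mulgA mulgK.
move=> [m]; rewrite mem_conjg => hL ->.
exists (fcmp (fcmp r d) (m ^ g^-1)%g); first by apply/mem_cosetf; exists (m ^ g^-1)%g.
by rewrite !comp_comp conjgE invgK !mulgA mulVg mul1g.
Qed.

Lemma rebase al be S T l r d : injective r ->
  S = cosetf l (Hcyc al) -> T = cosetf r (Hcyc be) -> d \in Dset S T ->
  exists r2, [/\ injective r2, S = cosetf (fcmp r2 d) (Hcyc al) &
                 T = cosetf r2 (Hcyc be)].
Proof.
move=> ir -> -> /[!inE] /existsP [r2 /andP [r2T lS]].
exists r2; split.
- by move: r2T => /mem_cosetf [k _ ->]; apply: comp_inj.
- by rewrite (cosetf_mem lS).
- by rewrite (cosetf_mem r2T).
Qed.

End Sp.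


Section Nat.
Variable n : nat.
Variables U V : finType.
Variable f : U -> V.
Hypothesis fi : injective f.

Definition Ff (l : {ffun 'I_n -> U}) : {ffun 'I_n -> V} := [ffun i => f (l i)].

Lemma Ff_inj : injective Ff.
Proof. move=> l l' /ffunP e; apply/ffunP => i; by move: (e i); rewrite !ffunE => /fi. Qed.

Lemma mem_Ff l (A : {set {ffun 'I_n -> U}}) : (Ff l \in Ff @: A) = (l \in A).
Proof. exact: (mem_imset _ _ Ff_inj). Qed.

Lemma Ff_comp l d : fcmp (Ff l) d = Ff (fcmp l d).
Proof. by apply/ffunP => i; rewrite !ffunE. Qed.

Lemma map_cosetsE (S : {set {ffun 'I_n -> U}}) : map_cosets f S = Ff @: S.
Proof. by []. Qed.

Lemma Dset_nat (S T : {set {ffun 'I_n -> U}}) : Dset (map_cosets f S) (map_cosets f T) = Dset S T.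
Proof.
apply/setP => d; rewrite !inE !map_cosetsE; apply/existsP/existsP.
  move=> [r /andP [/imsetP [r0 r0T ->]]]; rewrite Ff_comp mem_imset; last exact: Ff_inj.
  by move=> h; exists r0; rewrite r0T.
move=> [r /andP [rT h]]; exists (Ff r); rewrite Ff_comp !mem_imset ?rT //; exact: Ff_inj.
Qed.

Lemma Rset_nat ga d (S T : {set {ffun 'I_n -> U}}) :
  Rset ga d (map_cosets f S) (map_cosets f T) = map_cosets f (Rset ga d S T).
Proof.
rewrite /Rset.
have -> : Vset d (map_cosets f S) (map_cosets f T) = Ff @: Vset d S T.
  apply/setP => y; rewrite !inE !map_cosetsE; apply/andP/imsetP.
    move=> [/imsetP [l0 lS ->]]; rewrite Ff_comp mem_Ff => h.
    by exists l0; rewrite // inE lS h.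
  move=> [l0]; rewrite inE => /andP [lS h] ->.
  by rewrite Ff_comp !mem_Ff.
rewrite map_cosetsE -!imset_comp; apply: eq_imset => l0 /=.
by rewrite Ff_comp.
Qed.

End Nat.


Lemma size_flatten_map (S T : Type) (F : S -> seq T) (s : seq S) :
  size (flatten [seq F x | x <- s]) = \sum_(x <- s) size (F x).
Proof. by elim: s => [|x s IH]; rewrite ?big_nil ?big_cons //= size_cat IH. Qed.

Lemma sum_const_seq (S : Type) (s : seq S) c : \sum_(x <- s) c = size s * c.
Proof. by elim: s => [|x s IH]; rewrite ?big_nil ?big_cons //= IH mulSn. Qed.

Section Labels.
Variable n : nat.
Variables a b : intpartn n -> nat.

Definition Lab := (intpartn n * intpartn n * nat * nat * {set {perm 'I_n}})%type.

Definition DC (al be mu : intpartn n) : {set {set {perm 'I_n}}} :=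
  [set (Hcyc al :* pi * Hcyc be)%g | pi in [set pi | dcoset_cond al be mu pi]].

Definition labs4 mu al be i : seq Lab :=
  flatten [seq [seq (al, be, i, j, D) | D <- enum (DC al be mu)] | j <- iota 0 (b be)].
Definition labs3 mu al be : seq Lab := flatten [seq labs4 mu al be i | i <- iota 0 (a al)].
Definition labs2 mu al : seq Lab := flatten [seq labs3 mu al be | be <- index_enum (intpartn n)].
Definition labs mu : seq Lab := flatten [seq labs2 mu al | al <- index_enum (intpartn n)].

Lemma size_labs mu : size (labs mu) = prod_coef a b mu.
Proof.
rewrite /labs size_flatten_map /prod_coef; apply: eq_bigr => al _.
rewrite /labs2 size_flatten_map; apply: eq_bigr => be _.
rewrite /labs3 size_flatten_map.
rewrite (eq_bigr (fun _ => b be * bcoef al be mu)); last first.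
  move=> i _; rewrite /labs4 size_flatten_map.
  rewrite (eq_bigr (fun _ => bcoef al be mu)); last first.
    by move=> j _; rewrite size_map -cardE.
  by rewrite sum_const_seq size_iota.
by rewrite sum_const_seq size_iota mulnA.
Qed.

Lemma mem_labs mu al be i j D :
  ((al, be, i, j, D) \in labs mu) = [&& i < a al, j < b be & D \in DC al be mu].
Proof.
apply/idP/idP.
  move/flatten_mapP => [al' _ /flatten_mapP [be' _ /flatten_mapP [i' /[!mem_iota] hi
     /flatten_mapP [j' /[!mem_iota] hj /mapP [D' /[!mem_enum] hD [-> -> -> -> ->]]]]]].
  by rewrite hD andbT; apply/andP; split; lia.
move=> /and3P [hi hj hD].
apply/flatten_mapP; exists al; first exact: mem_index_enum.
apply/flatten_mapP; exists be; first exact: mem_index_enum.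
apply/flatten_mapP; exists i; first by rewrite mem_iota.
apply/flatten_mapP; exists j; first by rewrite mem_iota.
by apply/mapP; exists D; rewrite ?mem_enum.
Qed.

Lemma uniq_labs mu : uniq (labs mu).
Proof.
apply: (uniq_flatten_proj (pr := fun y : Lab => y.1.1.1.1)); first exact: index_enum_uniq.
  move=> al _; apply: (uniq_flatten_proj (pr := fun y : Lab => y.1.1.1.2)).
    exact: index_enum_uniq.
    move=> be _; apply: (uniq_flatten_proj (pr := fun y : Lab => y.1.1.2)).
      exact: iota_uniq.
      move=> i _; apply: (uniq_flatten_proj (pr := fun y : Lab => y.1.2)).
        exact: iota_uniq.
        move=> j _; rewrite map_inj_uniq ?enum_uniq //; by move=> D1 D2 [].
      by move=> j y _ /mapP [D _ ->].
    by move=> i y _ /flatten_mapP [j _ /mapP [D _ ->]].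
  by move=> be y _ /flatten_mapP [i _ /flatten_mapP [j _ /mapP [D _ ->]]].
by move=> al y _ /flatten_mapP [be _ /flatten_mapP [i _ /flatten_mapP [j _ /mapP [D _ ->]]]].
Qed.

End Labels.


Section Main.
Variable n : nat.
Variables a b : intpartn n -> nat.
Implicit Types al be mu : intpartn n.

Definition rep (D : {set {perm 'I_n}}) : {perm 'I_n} := odflt 1%g [pick d in D].
Definition mu_of al be (d : {perm 'I_n}) : intpartn n :=
  odflt al [pick mu | dcoset_cond al be mu d].
Definition g_of al be mu (d : {perm 'I_n}) : {perm 'I_n} :=
  odflt 1%g [pick g : {perm 'I_n} |
    ((Hcyc al :&: (d *: Hcyc be :* d^-1)) :^ g)%g == Hcyc mu :> {set _}].

Definition phi_raw (U : finType) al i (S : {set {ffun 'I_n -> U}}) be j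
    (T : {set {ffun 'I_n -> U}}) : intpartn n * nat * {set {ffun 'I_n -> U}} :=
  let D := Dset S T in let d := rep D in let mu := mu_of al be d in
  let g := g_of al be mu d in
  (mu, index (al, be, i, j, D) (labs a b mu), Rset g^-1 d S T).

Lemma rep_mem (D : {set {perm 'I_n}}) x : x \in D -> rep D \in D.
Proof. by rewrite /rep; case: pickP => [y //|/(_ x) ->]. Qed.

Lemma mu_of_spec al be d : dcoset_cond al be (mu_of al be d) d.
Proof.
rewrite /mu_of; case: pickP => [mu //|h].
by have [mu hm] := cond_exists al be d; move: (h mu); rewrite hm.
Qed.

Lemma mu_of_eq al be mu d : dcoset_cond al be mu d -> mu_of al be d = mu.
Proof. move=> h; exact: cond_uniq (mu_of_spec al be d) h. Qed.

Lemma g_of_spec al be mu d : dcoset_cond al be mu d ->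
  ((Hcyc al :&: (d *: Hcyc be :* d^-1)) :^ g_of al be mu d)%g = Hcyc mu :> {set _}.
Proof.
move=> /existsP [g hg]; rewrite /g_of; case: pickP => [g' /eqP //|h].
by move: (h g); rewrite hg.
Qed.

Lemma is_cosetP (U : finType) mu (S : {set {ffun 'I_n -> U}}) : is_coset mu S ->
  exists l : {ffun 'I_n -> U}, [/\ injective l, #|U| = n & S = cosetf l (Hcyc mu)].
Proof.
by move=> /existsP [l /and3P [/injectiveP il /eqP cU /eqP ->]]; exists l.
Qed.

Lemma is_cosetI (U : finType) mu (l : {ffun 'I_n -> U}) : injective l -> #|U| = n ->
  is_coset mu (cosetf l (Hcyc mu)).
Proof.
move=> il cU; apply/existsP; exists l; apply/and3P; split => //.
- by apply/injectiveP.
- by apply/eqP.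
Qed.

Lemma phi_spec (U : finType) al (i : nat) (S : {set {ffun 'I_n -> U}}) be (j : nat) (T : {set {ffun 'I_n -> U}}) (l r : {ffun 'I_n -> U}) :
  injective l -> injective r -> #|U| = n ->
  S = cosetf l (Hcyc al) -> T = cosetf r (Hcyc be) ->
  exists r2 : {ffun 'I_n -> U}, [/\ Dset S T = (Hcyc al :* rep (Dset S T) * Hcyc be)%g,
    dcoset_cond al be (mu_of al be (rep (Dset S T))) (rep (Dset S T)),
    injective r2, S = cosetf (fcmp r2 (rep (Dset S T))) (Hcyc al) &
    T = cosetf r2 (Hcyc be) /\
    (phi_raw al i S be j T).2 = cosetf (fcmp (fcmp r2 (rep (Dset S T)))
        (g_of al be (mu_of al be (rep (Dset S T))) (rep (Dset S T)))^-1)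
        (Hcyc (mu_of al be (rep (Dset S T))))].
Proof.
move=> il ir cU eS eT.
have [d0 ed0] := ex_perm ir il cU.
have eD : Dset S T = (Hcyc al :* d0 * Hcyc be)%g by rewrite eS eT ed0 Dset_comp.
have d0D : d0 \in Dset S T.
  by rewrite eD; apply/dc_memP; exists 1%g, 1%g; rewrite !group1 mulg1 mul1g.
set d := rep (Dset S T).
have dD : d \in Dset S T := rep_mem d0D.
have [r2 [ir2 eS2 eT2]] := rebase ir eS eT dD.
exists r2; split => //.
- by rewrite {1}eD -(dc_mem_eq (x := d)) // -eD.
- exact: mu_of_spec.
split => //.
rewrite /phi_raw /= -/d {1}eS2 {1}eT2.
by apply: Rset_comp => //; apply: g_of_spec; exact: mu_of_spec.
Qed.


Lemma CE_predP (c : intpartn n -> nat) (U : finType) (x : intpartn n * nat * {set {ffun 'I_n -> U}}) :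
  CE_pred c x -> x.1.2 < c x.1.1 /\
  exists l : {ffun 'I_n -> U}, [/\ injective l, #|U| = n & x.2 = cosetf l (Hcyc x.1.1)].
Proof. by move=> /andP [h1 /is_cosetP h2]. Qed.

Lemma phi_pred (U : finType) (x : CE a U) (y : CE b U) :
  CE_pred (prod_coef a b) (phi_raw (val x).1.1 (val x).1.2 (val x).2
                                   (val y).1.1 (val y).1.2 (val y).2).
Proof.
have [hi [l [il cU eS]]] := CE_predP (valP x).
have [hj [r [ir _ eT]]] := CE_predP (valP y).
have [r2 [eD hc ir2 _ [_ e2]]] := phi_spec (val x).1.2 (val y).1.2 il ir cU eS eT.
apply/andP; split.
  rewrite /phi_raw /= -size_labs index_mem mem_labs hi hj /= {1}eD.
  by apply/imsetP; exists (rep (Dset (val x).2 (val y).2)); rewrite ?inE.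
rewrite e2; apply: is_cosetI => //; do 2! apply: comp_inj => //.
Qed.

End Main.


Section Final.
Variable n : nat.
Variables a b : intpartn n -> nat.

Definition phi (U : finType) (p : (CE a U * CE b U)%type) : CE (prod_coef a b) U :=
  exist _ (phi_raw a b (val p.1).1.1 (val p.1).1.2 (val p.1).2
                       (val p.2).1.1 (val p.2).1.2 (val p.2).2) (phi_pred p.1 p.2).

Lemma phi_nat (U V : finType) (f : U -> V) (fb : bijective f) (x : (CE a U * CE b U)%type) :
  @phi V (CE_map fb x.1, CE_map fb x.2) = CE_map fb (@phi U x).
Proof.
apply: val_inj; rewrite /= /phi_raw /=.
by rewrite (Dset_nat (bij_inj fb)) (Rset_nat (bij_inj fb)).
Qed.


Lemma lab_mem (U : finType) al i (S : {set {ffun 'I_n -> U}}) be j T (l r : {ffun 'I_n -> U}) :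
  i < a al -> j < b be -> injective l -> injective r -> #|U| = n ->
  S = cosetf l (Hcyc al) -> T = cosetf r (Hcyc be) ->
  (al, be, i, j, Dset S T) \in labs a b (mu_of al be (rep (Dset S T))).
Proof.
move=> hi hj il ir cU eS eT.
have [r2 [eD hc ir2 _ [_ e2]]] := phi_spec a b i j il ir cU eS eT.
rewrite mem_labs hi hj /= {1}eD.
by apply/imsetP; exists (rep (Dset S T)); rewrite ?inE.
Qed.

Lemma phi_inj (U : finType) : injective (@phi U).
Proof.
move=> [[[[al i] S] px] [[[be j] T] py]] [[[[al' i'] S'] px'] [[[be' j'] T'] py']].
move/(congr1 val); rewrite /= /phi_raw /=.
have [hi [l [il cU eS]]] := CE_predP px.
have [hj [r [ir _ eT]]] := CE_predP py.
have [hi' [l' [il' _ eS']]] := CE_predP px'.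
have [hj' [r' [ir' _ eT']]] := CE_predP py'.
rewrite /= in hi hj hi' hj' eS eT eS' eT' .
have m1 := lab_mem hi hj il ir cU eS eT.
have m2 := lab_mem hi' hj' il' ir' cU eS' eT'.
have [r2 [eD hc ir2 eS2 [eT2 e2]]] := phi_spec a b i j il ir cU eS eT.
move=> [emu eidx eR].
rewrite -emu in eidx m2.
have := congr1 (nth (al, al, 0, 0, set0) (labs a b (mu_of al be (rep (Dset S T))))) eidx.
rewrite !nth_index // => -[eal ebe ei ej eDD].
subst al' be' i' j'.
rewrite -eDD in eR.
set d := rep (Dset S T) in eR eS2 eT2.
set g := g_of al be (mu_of al be d) d in eR.
clearbody g d.
set l2 := fcmp r2 d.
have l2V : l2 \in Vset d S T.
  rewrite inE; apply/andP; split; first by rewrite {1}eS2; apply: cosetf_id.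
  rewrite /l2 comp_comp mulVg comp1 eT2; apply: cosetf_id.
have : fcmp l2 g^-1 \in Rset g^-1 d S' T'.
  by rewrite -eR; apply/imsetP; exists l2.
move=> /imsetP [l3 l3V /comp_injl e3]; subst l3.
move: l3V; rewrite inE => /andP [l2S' l2T'].
have eSS : S = S'.
  rewrite eS' in l2S'.
  have h := @cosetf_mem _ _ _ _ (Hcyc al) l2S'.
  rewrite eS2 eS'; rewrite /Hcyc /= in h *; rewrite -h /l2.
  reflexivity.
have eTT : T = T'.
  rewrite /l2 comp_comp mulVg comp1 eT' in l2T'.
  have h := @cosetf_mem _ _ _ _ (Hcyc be) l2T'.
  rewrite eT2 eT'; rewrite /Hcyc /= in h *; rewrite -h.
  reflexivity.
move: px' py'; rewrite -eSS -eTT => px' py'.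
by rewrite (eq_irrelevance px px') (eq_irrelevance py py').
Qed.



Lemma phi_surj (U : finType) (z : CE (prod_coef a b) U) : exists p, @phi U p = z.
Proof.
case: z => [[[mu k] R] pz].
have [hk [th [ith cU eR]]] := CE_predP pz.
rewrite /= in hk eR.
have labm : nth (mu, mu, 0, 0, set0) (labs a b mu) k \in labs a b mu.
  by apply: mem_nth; rewrite size_labs.
have idx : index (nth (mu, mu, 0, 0, set0) (labs a b mu) k) (labs a b mu) = k.
  by apply: index_uniq; rewrite ?size_labs ?uniq_labs.
move: labm idx; case: (nth _ _ _) => [[[[al be] i] j] D] labm idx.
rewrite mem_labs in labm; case/and3P: labm => hi hj /imsetP [pi]; rewrite inE => hpi eD.
pose d := rep D.
have piD : pi \in D.
  rewrite eD; apply/dc_memP; exists 1%g, 1%g.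
  by rewrite !group1 mulg1 mul1g.
have dD : d \in D := rep_mem piD.
have hd : dcoset_cond al be mu d by apply: cond_dc hpi _; rewrite -eD.
pose g := g_of al be mu d.
have hg := g_of_spec hd.
pose l1 := fcmp th g.
pose r1 := fcmp l1 d^-1.
have el1 : l1 = fcmp r1 d by rewrite /r1 comp_comp mulgV comp1.
have il1 : injective l1 by apply: comp_inj.
have ir1 : injective r1 by apply: comp_inj.
have px : CE_pred a (al, i, cosetf l1 (Hcyc al)).
  by apply/andP; split => //; apply: is_cosetI.
have py : CE_pred b (be, j, cosetf r1 (Hcyc be)).
  by apply/andP; split => //; apply: is_cosetI.
exists (@exist _ (fun x => CE_pred a x) _ px, @exist _ (fun x => CE_pred b x) _ py).
apply: val_inj; rewrite /= /phi_raw /=.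
have eDs : Dset (cosetf l1 (Hcyc al)) (cosetf r1 (Hcyc be)) = D.
  rewrite el1 Dset_comp // (dc_mem_eq (pi := pi)) -?eD //.
rewrite eDs -/d (mu_of_eq hd) -/g idx.
have eRR : Rset g^-1 d (cosetf l1 (Hcyc al)) (cosetf r1 (Hcyc be)) = R.
  rewrite el1 (Rset_comp ir1 hg) -el1 /l1 comp_comp mulVg comp1 eR.
  reflexivity.
by rewrite eRR.
Qed.

End Final.

Theorem mainTheorem11 (n : nat) (a b : intpartn n -> nat) :
  exists phi : forall U : finType, (CE a U * CE b U)%type -> CE (prod_coef a b) U,
    (forall U : finType, bijective (phi U)) /\
    (forall (U V : finType) (f : U -> V) (fb : bijective f) (x : (CE a U * CE b U)%type),
        phi V (CE_map fb x.1, CE_map fb x.2) = CE_map fb (phi U x)).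
Proof.
exists (fun U => @phi n a b U); split; last first.
  by move=> U V f fb x; apply: phi_nat.
move=> U.
pose ginv z := proj1_sig (constructive_indefinite_description _ (@phi_surj n a b U z)).
have gK z : @phi n a b U (ginv z) = z.
  exact: (proj2_sig (constructive_indefinite_description _ (@phi_surj n a b U z))).
exists ginv => [p|z]; last exact: gK.
by apply: (@phi_inj n a b U); rewrite gK.
Qed.
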